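(* If a fixed point of the function $\mathbf{h}$ exists, it is unique.
   Context: Let $\mathbf{A}\in\mathbb{R}^{n\times n}$ be partitioned into square $b\times b$ blocks, and $S_B$ a set of block indices containing all diagonal blocks. The unknowns (entries of the block ILU factors $\mathbf{L}_{ij}$, $i>j$, and $\mathbf{U}_{ij}$, $i\le j$, for $(i,j)\in S_B$) form $\mathbf{x}\in\mathbb{R}^m$, $m=|S_B|b^2$, with $\mathbf{X}_{ij}$ the $b\times b$ block for index $(i,j)$. The map $\mathbf{h}:D_B\to\mathbb{R}^m$ is given blockwise by $\mathbf{H}_{ij}(\mathbf{x})=(\mathbf{A}_{ij}-\sum_{k=1}^{j-1}\mathbf{X}_{ik}\mathbf{X}_{kj})\mathbf{X}_{jj}^{-1}$ for $i>j$ and $\mathbf{H}_{ij}(\mathbf{x})=\mathbf{A}_{ij}-\sum_{k=1}^{i-1}\mathbf{X}_{ik}\mathbf{X}_{kj}$ for $i\le j$, on $D_B:=\{\mathbf{x}: \mathbf{X}_{jj}\text{ nonsingular for all diagonal blocks}\}$. *)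

(* Defs.v *)
From HB Require Import structures.
From mathcomp Require Import all_boot all_order all_algebra.
From mathcomp Require Import reals.
Set Implicit Arguments. Unset Strict Implicit. Unset Printing Implicit Defensive.
Import Order.TTheory GRing.Theory Num.Theory.
Local Open Scope ring_scope.

(* Blocks are indexed 0..N-1 (paper: 1..N); each block is b x b; n = N*b.
   Row r of block i is global row i*b + r (mxvec_index i r). *)
Definition blk (R : realType) (N b : nat) (A : 'M[R]_(N * b)) (i j : 'I_N)
  : 'M[R]_b :=
  \matrix_(r < b, c < b) A (mxvec_index i r) (mxvec_index j c).

(* The unknown vector x is represented blockwise by X : 'I_N -> 'I_N -> 'M_b;
   only the blocks X i j with (i,j) \in S carry unknowns.  Entries outside the
   pattern S are not unknowns (they are the zero entries of the ILU factors),
   hence the sums only range over k with (i,k) and (k,j) in S. *)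
Definition Hmap (R : realType) (N b : nat) (S : {set 'I_N * 'I_N})
  (A : 'M[R]_(N * b)) (X : 'I_N -> 'I_N -> 'M[R]_b) (i j : 'I_N) : 'M[R]_b :=
  if (j < i)%N then
    (blk A i j - \sum_(k < N | [&& (k < j)%N, (i, k) \in S & (k, j) \in S])
                   X i k *m X k j) *m invmx (X j j)
  else
    blk A i j - \sum_(k < N | [&& (k < i)%N, (i, k) \in S & (k, j) \in S])
                  X i k *m X k j.

Definition in_DB (R : realType) (N b : nat) (X : 'I_N -> 'I_N -> 'M[R]_b) :=
  forall j : 'I_N, X j j \in unitmx.

Definition is_fixed_point (R : realType) (N b : nat) (S : {set 'I_N * 'I_N})
  (A : 'M[R]_(N * b)) (X : 'I_N -> 'I_N -> 'M[R]_b) :=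
  forall i j : 'I_N, (i, j) \in S -> X i j = Hmap S A X i j.

(* Main.v *)
Require Import Defs.
From HB Require Import structures.
From mathcomp Require Import all_boot all_order all_algebra.
From mathcomp Require Import reals.
From mathcomp Require Import zify.
Local Open Scope ring_scope.

Lemma theorem7_aux (R : realType) (N b : nat) (A : 'M[R]_(N * b))
  (S : {set 'I_N * 'I_N}) (hS : forall i : 'I_N, (i, i) \in S)
  (X Y : 'I_N -> 'I_N -> 'M[R]_b) :
  is_fixed_point S A X -> is_fixed_point S A Y ->
  forall n, forall i j : 'I_N, (2 * minn i j + (j < i) < n)%N ->
    (i, j) \in S -> X i j = Y i j.
Proof.
move=> fX fY n; elim: n => [|n IH] i j // Hm hij.
rewrite (fX i j hij) (fY i j hij) /Hmap.
case: ltnP => Hji.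
- rewrite Hji in Hm.
  rewrite (IH j j _ (hS j)); last by rewrite ltnn addn0; move: Hm => /=; lia.
  congr ((_ - _) *m _).
  apply: eq_bigr => k /and3P [Hk Hik Hkj].
  have Hki : (k < i)%N by lia.
  rewrite (IH i k _ Hik) ?(IH k j _ Hkj) //;
    rewrite ?Hk ?Hki; move: Hm => /=; lia.
- rewrite (ltnNge j i) Hji /= in Hm.
  congr (_ - _).
  apply: eq_bigr => k /and3P [Hk Hik Hkj].
  have Hkj' : (k < j)%N by lia.
  have Hik' : (i < k)%N = false by apply/negbTE; rewrite -leqNgt; lia.
  rewrite (IH i k _ Hik) ?(IH k j _ Hkj) //;
    rewrite ?Hk ?Hik'; move: Hm => /=; lia.
Qed.

Theorem theorem7 (R : realType) (N b : nat) (A : 'M[R]_(N * b))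
  (S : {set 'I_N * 'I_N}) (hS : forall i : 'I_N, (i, i) \in S)
  (X Y : 'I_N -> 'I_N -> 'M[R]_b) :
  in_DB X -> in_DB Y -> is_fixed_point S A X -> is_fixed_point S A Y ->
  forall i j : 'I_N, (i, j) \in S -> X i j = Y i j.
Proof.
move=> _ _ fX fY i j hij.
apply: (@theorem7_aux R N b A S hS X Y fX fY _ i j _ hij).
exact: ltnSn.
Qed.
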